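(* Let $n,d\ge2$, $c\in\mathbb{C}$, and $f=(x_0^d + c x_1^d : x_1^d : \dots : x_n^d)$, an endomorphism of $\mathbb{P}^n_{\mathbb{C}}$. Then the critical locus $C_f = V(x_0 x_1\cdots x_n)$ is dynamically improper under $f$, and $C_f$ is preperiodic under $f$ if and only if $0$ is preperiodic under $g(z)=z^d+c$.
   Context: The critical locus of $f=(f_0:\dots:f_n)$ is $C_f=V(\det(\partial f_i/\partial x_j))$. A hypersurface $H$ is improper under $f$ if for every irreducible component $Z$ of $H$ there exist integers $0\le i_0<\dots<i_n$ with $f^{i_0}(Z)\cap\dots\cap f^{i_n}(Z)\neq\varnothing$; it is dynamically improper if improper under $f^r$ for every $r>0$. A subvariety $X$ is preperiodic under $f$ if for every irreducible component $Z$ of $X$ there exist distinct $s,t\ge0$ with $f^s(Z)=f^t(Z)$. *)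

(* Defs.v *)
From HB Require Import structures.
From mathcomp Require Import all_boot all_order all_algebra.
From mathcomp Require Import reals Rstruct.
From mathcomp Require Import complex.
From mathcomp Require Import mpoly.

Set Implicit Arguments.
Unset Strict Implicit.
Unset Printing Implicit Defensive.

Import GRing.Theory.
Local Open Scope ring_scope.

Definition CC : Type := complex Rdefinitions.R.

(* Points of P^n are represented by (nonzero) vectors in C^(n+1);
   a subset of P^n is represented by a predicate on vectors which only
   holds on nonzero vectors and is invariant under nonzero scaling
   (all sets constructed below have this property). *)
Definition vec (n : nat) := 'I_n.+1 -> CC.
Definition pset (n : nat) := vec n -> Prop.

Definition nonzero n (v : vec n) : Prop := exists i, v i != 0.

Definition subset_p n (A B : pset n) : Prop := forall v, A v -> B v.
Definition eq_p n (A B : pset n) : Prop := forall v, A v <-> B v.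

Definition zclosed n (X : pset n) : Prop :=
  exists S : {mpoly CC[n.+1]} -> Prop,
    (forall p, S p -> exists k, p \is k.-homog) /\
    forall v, X v <-> (nonzero v /\ forall p, S p -> p.@[v] = 0).

Definition hyp n (p : {mpoly CC[n.+1]}) : pset n :=
  fun v => nonzero v /\ p.@[v] = 0.

Definition zirreducible n (Z : pset n) : Prop :=
  zclosed Z /\ (exists v, Z v) /\
  forall A B : pset n, zclosed A -> zclosed B ->
    subset_p Z (fun v => A v \/ B v) -> subset_p Z A \/ subset_p Z B.

Definition icomponent n (X Z : pset n) : Prop :=
  zirreducible Z /\ subset_p Z X /\
  forall W, zirreducible W -> subset_p Z W -> subset_p W X -> subset_p W Z.

Definition pmap n := 'I_n.+1 -> {mpoly CC[n.+1]}.

Definition evalmap n (f : pmap n) (v : vec n) : vec n := fun i => (f i).@[v].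

Definition pimage n (f : pmap n) (A : pset n) : pset n :=
  fun w => nonzero w /\ exists v (l : CC), A v /\ l != 0 /\ w = (fun i => l * evalmap f v i).

Definition piter n (f : pmap n) (k : nat) (A : pset n) : pset n := iter k (pimage f) A.

Definition jacobian n (f : pmap n) : 'M[{mpoly CC[n.+1]}]_(n.+1) :=
  \matrix_(i, j) mderiv j (f i).
Definition critical_locus n (f : pmap n) : pset n := hyp (\det (jacobian f)).

Definition improper_iter n (f : pmap n) (r : nat) (H : pset n) : Prop :=
  forall Z, icomponent H Z ->
    exists idx : 'I_n.+1 -> nat,
      (forall j k : 'I_n.+1, (j < k)%N -> (idx j < idx k)%N) /\
      exists v, forall j, piter f (r * idx j) Z v.

Definition improper n (f : pmap n) (H : pset n) := improper_iter f 1 H.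

Definition dyn_improper n (f : pmap n) (H : pset n) : Prop :=
  forall r, (0 < r)%N -> improper_iter f r H.

Definition preperiodic n (f : pmap n) (X : pset n) : Prop :=
  forall Z, icomponent X Z ->
    exists s t : nat, s <> t /\ eq_p (piter f s Z) (piter f t Z).

Definition fmap_c n (d : nat) (c : CC) : pmap n :=
  fun i => if (i : nat) == 0%N then 'X_i ^+ d + c *: 'X_(inord 1) ^+ d
           else 'X_i ^+ d.
Arguments fmap_c : clear implicits.

(* Main.v *)
Require Import Defs.
From HB Require Import structures.
From mathcomp Require Import all_boot all_order all_algebra.
From mathcomp Require Import reals Rstruct complex mpoly.
From Stdlib Require Import Classical FunctionalExtensionality.
From mathcomp Require Import ring.
Set Implicit Arguments. Unset Strict Implicit.
Local Open Scope ring_scope.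
Import GRing.Theory Num.Theory.


Lemma mderivXU n (i j : 'I_n) :
  mderiv j ('X_i : {mpoly CC[n]}) = ((i == j)%:R)%:MP.
Proof.
rewrite mderivX mnm1E; case: eqP => [->|_].
  have -> : (U_(j) - U_(j) = 0)%MM by apply/mnmP => k; rewrite mnmBE subnn mnm0E.
  by rewrite mpolyX0 scale1r mpolyC1.
by rewrite scale0r mpolyC0.
Qed.

Lemma eval_mderivXn n (v : 'I_n -> CC) (i j : 'I_n) k :
  (mderiv j ('X_i ^+ k : {mpoly CC[n]})).@[v] =
  (i == j)%:R * k%:R * v i ^+ k.-1.
Proof.
elim: k => [|k IH].
  by rewrite expr0 -mpolyC1 mderivC meval0 !mulr0 mul0r.
rewrite exprS mderivM mevalD !mevalM IH mderivXU mevalC mevalXU.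
case: k IH => [|k] IH /=.
  by rewrite !expr0 !mulr0 meval1 !mul0r !mulr1 mulr0 addr0.
rewrite rmorphXn /= mevalXU exprS. move: (v i) ((i == j)%:R : CC) => x b. rewrite -!natr1. ring.
Qed.

Lemma one_val n : (1 <= n)%N -> ((inord 1 : 'I_n.+1) : nat) = 1%N.
Proof. by move=> h; rewrite inordK. Qed.

Lemma fentry n d c (v : vec n) (i j : 'I_n.+1) :
  (mderiv i (fmap_c n d c j)).@[v] =
  (j == i)%:R * d%:R * v j ^+ d.-1 +
  (if (j : nat) == 0%N then c * ((inord 1 == i)%:R * d%:R * v (inord 1) ^+ d.-1) else 0).
Proof.
rewrite /fmap_c; case: eqP => _.
  rewrite mderivD mevalD (@mderivZ _ _ i c) mevalZ.
  rewrite [X in X + _ = _](@eval_mderivXn _ v j i d).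
  by rewrite [X in _ + _ * X = _](@eval_mderivXn _ v (inord 1) i d).
rewrite [X in X = _](@eval_mderivXn _ v j i d).
by rewrite addr0.
Qed.


Lemma det_jac n d c (v : vec n) : (1 <= n)%N ->
  (\det (jacobian (fmap_c n d c))).@[v] = \prod_(i < n.+1) (d%:R * v i ^+ d.-1).
Proof.
move=> n1.
have -> : (\det (jacobian (fmap_c n d c))).@[v] =
   \det (map_mx (meval v) (jacobian (fmap_c n d c)))^T.
  by rewrite det_tr det_map_mx.
rewrite det_trig.
  apply: eq_bigr => i _; rewrite !mxE fentry eqxx /= mul1r.
  case: eqP => [i0|_]; last by rewrite addr0.
  have -> : (inord 1 == i) = false.
    by apply/negbTE; apply/eqP => h; move: i0; rewrite -h one_val.
  by rewrite !mul0r mulr0 addr0.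
apply/is_trig_mxP => i j lt_ij; rewrite !mxE fentry.
have -> : (j == i) = false by apply/negbTE; rewrite neq_ltn lt_ij orbT.
have -> : ((j : nat) == 0%N) = false.
  by apply/negbTE; rewrite -lt0n (leq_ltn_trans _ lt_ij).
by rewrite !mul0r add0r.
Qed.

Lemma eval_prodX n (v : vec n) (s : seq 'I_n.+1) :
  (\prod_(i <- s) ('X_i : {mpoly CC[n.+1]})).@[v] = \prod_(i <- s) v i.
Proof.
elim: s => [|i s IH]; first by rewrite !big_nil meval1.
by rewrite !big_cons mevalM IH mevalXU.
Qed.

Lemma prod0_iff (n : nat) (v : vec n) (s : seq 'I_n.+1) :
  \prod_(i <- s) v i = 0 <-> exists i, i \in s /\ v i = 0.
Proof.
split.
  move/eqP; rewrite prodf_seq_eq0 => /hasP [i hi /andP [_ /eqP h]].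
  by exists i.
move=> [i [hi h]]; apply/eqP; rewrite prodf_seq_eq0; apply/hasP; exists i => //.
by rewrite h eqxx.
Qed.

Lemma prodX_iff n (v : vec n) :
  hyp (\prod_(i < n.+1) 'X_i) v <-> nonzero v /\ exists i, v i = 0.
Proof.
rewrite /hyp eval_prodX prod0_iff; split.
  by move=> [h [i [_ hi]]]; split => //; exists i.
by move=> [h [i hi]]; split => //; exists i; rewrite mem_index_enum.
Qed.

Lemma crit_iff n d c (v : vec n) : (1 <= n)%N -> (2 <= d)%N ->
  critical_locus (fmap_c n d c) v <-> nonzero v /\ exists i, v i = 0.
Proof.
move=> n1 d2; rewrite /critical_locus /hyp det_jac //.
have -> : \prod_(i < n.+1) (d%:R * v i ^+ d.-1) = \prod_(i <- index_enum 'I_n.+1) (d%:R * v i ^+ d.-1) by [].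
split.
  move=> [h /eqP]; rewrite prodf_seq_eq0 => /hasP [i _ /andP [_]].
  rewrite mulf_eq0 pnatr_eq0 expf_eq0 => /orP [/eqP d0|/andP [_ /eqP vi]].
    by move: d2; rewrite d0.
  by split => //; exists i.
move=> [h [i hi]]; split => //; apply/eqP; rewrite prodf_seq_eq0; apply/hasP.
exists i; first by rewrite mem_index_enum.
rewrite /= hi expr0n; case: d d2 => [|[|d]] //= _; by rewrite mulr0.
Qed.


Lemma mmap_horner N (p : {mpoly CC[N]}) (U : 'I_N -> {poly CC}) (t : CC) :
  (mmap (@polyC _) U p).[t] = p.@[fun k => (U k).[t]].
Proof.
rewrite /mmap mevalE horner_sum; apply: eq_bigr => m _.
rewrite hornerM hornerC /mmap1 horner_prod; congr (_ * _).
by apply: eq_bigr => k _; rewrite horner_exp.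
Qed.

Lemma nonroot (P : {poly CC}) : P != 0 -> exists t, P.[t] != 0.
Proof.
move=> P0; apply: NNPP => hn.
have hall : forall t, P.[t] = 0.
  by move=> t; apply/eqP; apply: negbNE; apply/negP => h; apply: hn; exists t.
set rs := [seq (k%:R : CC) | k <- iota 0 (size P)].
have : (size rs < size P)%N.
  apply: max_poly_roots P0 _ _.
    by apply/allP => x _; rewrite /root hall.
  by rewrite map_inj_uniq ?iota_uniq // => a b /eqP; rewrite eqr_nat => /eqP.
by rewrite /rs size_map size_iota ltnn.
Qed.

Definition Hh n (i : 'I_n.+1) : pset n := hyp ('X_i).
Arguments Hh {n}.

Lemma Hh_iff n (i : 'I_n.+1) (v : vec n) : Hh i v <-> nonzero v /\ v i = 0.
Proof. by rewrite /Hh /hyp mevalXU. Qed.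

Lemma zclosed_hyp n (p : {mpoly CC[n.+1]}) k : p \is k.-homog -> zclosed (hyp p).
Proof.
move=> hp; exists (fun q => q = p); split; first by move=> q ->; exists k.
move=> v; split; first by move=> [h1 h2]; split => // q ->.
by move=> [h1 h2]; split => //; apply: h2.
Qed.

Lemma homogX n (i : 'I_n.+1) : ('X_i : {mpoly CC[n.+1]}) \is 1.-homog.
Proof. by rewrite dhomogX; apply/eqP; exact: mdeg1. Qed.

Lemma homog_prodX n (s : seq 'I_n.+1) :
  (\prod_(i <- s) ('X_i : {mpoly CC[n.+1]})) \is (size s).-homog.
Proof.
elim: s => [|i s IH]; first by rewrite big_nil dhomog1.
by rewrite big_cons; have := dhomogM (homogX i) IH; rewrite add1n.
Qed.

Lemma zclosed_Hh n (i : 'I_n.+1) : zclosed (Hh i).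
Proof. exact: zclosed_hyp (homogX i). Qed.

Definition Us n (s : seq 'I_n.+1) : pset n :=
  fun v => nonzero v /\ exists i, i \in s /\ v i = 0.
Arguments Us {n}.

Lemma zclosed_Us n (s : seq 'I_n.+1) : zclosed (Us s).
Proof.
have [S [hS hiff]] := zclosed_hyp (homog_prodX s).
exists S; split => // v; rewrite -hiff /hyp eval_prodX prod0_iff; done.
Qed.

Lemma irr_split n (Z : pset n) (s : seq 'I_n.+1) :
  zirreducible Z -> subset_p Z (Us s) -> exists i, subset_p Z (Hh i).
Proof.
move=> hZ; elim: s => [|i s IH] hsub.
  have [_ [[v Zv] _]] := hZ.
  by have [_ [j [hj _]]] := hsub v Zv; rewrite in_nil in hj.
have [_ [_ hirr]] := hZ.
have := hirr (Hh i) (Us s) (zclosed_Hh i) (zclosed_Us s).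
case.
- move=> v Zv; have [nz [j [hj vj]]] := hsub v Zv.
  move: hj; rewrite in_cons => /orP [/eqP ji|js].
    by left; apply/Hh_iff; split => //; rewrite -ji.
  by right; split => //; exists j.
- by move=> h; exists i.
- exact: IH.
Qed.

Lemma Hh_irr n (i : 'I_n.+1) : (1 <= n)%N -> zirreducible (Hh i).
Proof.
move=> n1; split; first exact: zclosed_Hh.
split.
  pose k : 'I_n.+1 := if (i : nat) == 0%N then inord 1 else ord0.
  have ik : (i == k) = false.
    apply/negbTE/eqP => e; move: e; rewrite /k; case: eqP => h e.
      by move: h; rewrite e one_val.
    by apply: h; rewrite e.
  exists (fun j => (j == k)%:R); apply/Hh_iff; split; last by rewrite ik.
  by exists k; rewrite eqxx oner_neq0.
move=> A B [SA [hSA hA]] [SB [hSB hB]] hsub.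
case: (classic (subset_p (Hh i) A)) => hnA; first by left.
case: (classic (subset_p (Hh i) B)) => hnB; first by right.
exfalso.
have [v [Hv nAv]] : exists v, Hh i v /\ ~ A v.
  apply: NNPP => h; apply: hnA => v Hv; apply: NNPP => nA; apply: h; by exists v.
have [w [Hw nBw]] : exists w, Hh i w /\ ~ B w.
  apply: NNPP => h; apply: hnB => w Hw; apply: NNPP => nB; apply: h; by exists w.
have [[j vj] vi] := proj1 (Hh_iff i v) Hv.
have [nzw wi] := proj1 (Hh_iff i w) Hw.
have [p [Sp pv]] : exists p, SA p /\ p.@[v] != 0.
  apply: NNPP => h; apply: nAv; apply/hA; split; first by exists j.
  move=> p Sp; apply: NNPP => hp; apply: h; exists p; split => //; exact/eqP.
have [q [Sq qw]] : exists q, SB q /\ q.@[w] != 0.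
  apply: NNPP => h; apply: nBw; apply/hB; split => //.
  move=> q Sq; apply: NNPP => hq; apply: h; exists q; split => //; exact/eqP.
pose U := fun k => (v k)%:P + 'X * (w k - v k)%:P.
have hU : forall t k, (U k).[t] = v k + t * (w k - v k).
  by move=> t k; rewrite /U hornerD hornerC hornerM hornerX hornerC.
pose P := mmap (@polyC _) U p.
pose Q := mmap (@polyC _) U q.
have P0 : P.[0] = p.@[v].
  by rewrite mmap_horner; apply: meval_eq => k; rewrite hU mul0r addr0.
have Q1 : Q.[1] = q.@[w].
  by rewrite mmap_horner; apply: meval_eq => k; rewrite hU mul1r addrC subrK.
have V0 : (U j).[0] = v j by rewrite hU mul0r addr0.
have nz : P * Q * U j != 0.
  rewrite !mulf_neq0 //; apply/eqP => e.
  - by move: pv; rewrite -P0 e horner0 eqxx.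
  - by move: qw; rewrite -Q1 e horner0 eqxx.
  - by move: vj; rewrite -V0 e horner0 eqxx.
have [t ht] := nonroot nz.
move: ht; rewrite !hornerM !mulf_eq0 !negb_or => /andP [/andP [Pt Qt] Ut].
pose u : vec n := fun k => (U k).[t].
have Hu : Hh i u.
  apply/Hh_iff; split; first by exists j.
  by rewrite /u hU vi wi subrr mulr0 addr0.
case: (hsub u Hu) => [/hA [_ h] | /hB [_ h]].
  by move: Pt; rewrite mmap_horner h // eqxx.
by move: Qt; rewrite mmap_horner h // eqxx.
Qed.


Lemma Hh_sub_crit n d c (i : 'I_n.+1) : (1 <= n)%N -> (2 <= d)%N ->
  subset_p (Hh i) (critical_locus (fmap_c n d c)).
Proof.
move=> n1 d2 v /Hh_iff [nz vi]; apply/crit_iff => //; split => //; by exists i.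
Qed.

Lemma comp_Hh n d c (Z : pset n) : (1 <= n)%N -> (2 <= d)%N ->
  icomponent (critical_locus (fmap_c n d c)) Z -> exists i, eq_p Z (Hh i).
Proof.
move=> n1 d2 [hZ [hsub hmax]].
have [i hi] : exists i, subset_p Z (Hh i).
  apply: (irr_split (s := index_enum 'I_n.+1) hZ) => v Zv.
  have /crit_iff [] // := hsub v Zv => nz [j vj].
  by split => //; exists j; rewrite mem_index_enum.
exists i => v; split; first exact: hi.
by apply: (hmax (Hh i)); [exact: Hh_irr | exact: hi | exact: Hh_sub_crit].
Qed.

Lemma Hh_comp n d c (i : 'I_n.+1) : (1 <= n)%N -> (2 <= d)%N ->
  icomponent (critical_locus (fmap_c n d c)) (Hh i).
Proof.
move=> n1 d2; split; first exact: Hh_irr.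
split; first exact: Hh_sub_crit.
move=> W hW hHW hWc.
have [j hj] : exists j, subset_p W (Hh j).
  apply: (irr_split (s := index_enum 'I_n.+1) hW) => v Wv.
  have /crit_iff [] // := hWc v Wv => nz [k vk].
  by split => //; exists k; rewrite mem_index_enum.
case: (eqVneq i j) => [e|ij]; first by rewrite e.
exfalso.
have ji : (j != i) by rewrite eq_sym.
pose e : vec n := fun k => (k != i)%:R.
have He : Hh i e.
  apply/Hh_iff; split; last by rewrite /e eqxx.
  by exists j; rewrite /e ji oner_neq0.
have /Hh_iff [_] := hj e (hHW e He).
by rewrite /e ji; apply/eqP; rewrite oner_neq0.
Qed.


Lemma evalf n d c (v : vec n) (k : 'I_n.+1) :
  evalmap (fmap_c n d c) v k =
  if (k : nat) == 0%N then v k ^+ d + c * v (inord 1) ^+ d else v k ^+ d.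
Proof.
rewrite /evalmap /fmap_c; case: eqP => _.
  rewrite mevalD mevalZ.
  rewrite [X in X + _ = _]rmorphXn [X in _ + _ * X = _]rmorphXn /=.
  by rewrite !mevalXU.
by rewrite rmorphXn /= mevalXU.
Qed.

Lemma pimage_eq n (f : Defs.pmap n) (A B : pset n) :
  eq_p A B -> eq_p (pimage f A) (pimage f B).
Proof.
move=> hAB w; split => -[nz [v [l [Av [l0 e]]]]]; split => //; exists v, l.
  by split => //; apply/hAB.
by split => //; apply/hAB.
Qed.

Lemma piter_eq n (f : Defs.pmap n) k (A B : pset n) :
  eq_p A B -> eq_p (piter f k A) (piter f k B).
Proof.
move=> h; elim: k => [|k IH] //=.
exact: pimage_eq.
Qed.

Lemma eq_p_trans n (A B C : pset n) : eq_p A B -> eq_p B C -> eq_p A C.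
Proof. by move=> h1 h2 v; rewrite h1 h2. Qed.

Lemma eq_p_sym n (A B : pset n) : eq_p A B -> eq_p B A.
Proof. by move=> h v; rewrite h. Qed.

Lemma fixed_piter n (f : Defs.pmap n) (A : pset n) (e : vec n) :
  A e -> nonzero e -> (forall k, evalmap f e k = e k) -> forall k, piter f k A e.
Proof.
move=> Ae nz fe; elim=> [|k IH] //=.
split => //; exists e, 1; split => //; split; first exact: oner_neq0.
by apply: functional_extensionality => i; rewrite mul1r fe.
Qed.

Lemma preimage_nz n d c (x w : vec n) : (0 < d)%N ->
  nonzero w -> (forall k, w k = evalmap (fmap_c n d c) x k) -> nonzero x.
Proof.
move=> d0 [k wk] hw; apply: NNPP => hx.
have x0 : forall j, x j = 0.
  move=> j; apply/eqP; apply: NNPP => h; apply: hx; exists j; exact/negP.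
move: wk; rewrite hw evalf !x0 expr0n (gtn_eqF d0) mulr0n mulr0 addr0 if_same eqxx.
by [].
Qed.

Lemma rootK d (z : CC) : (0 < d)%N -> (d.-root z) ^+ d = z.
Proof. by move=> d0; rewrite rootCK. Qed.

Lemma root00 d : (0 < d)%N -> d.-root (0 : CC) = 0.
Proof. by move=> d0; apply/eqP; rewrite rootC_eq0. Qed.

Lemma one_neq0 n : (1 <= n)%N -> ((inord 1 : 'I_n.+1) : nat) == 0%N = false.
Proof. by move=> n1; rewrite one_val. Qed.

Lemma image_Hi n d c (i : 'I_n.+1) : (1 <= n)%N -> (0 < d)%N -> (i : nat) != 0%N ->
  eq_p (pimage (fmap_c n d c) (Hh i)) (Hh i).
Proof.
move=> n1 d0 i0 w; split.
  move=> [nz [v [l [/Hh_iff [nzv vi] [l0 e]]]]]; apply/Hh_iff; split => //.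
  by rewrite e /= evalf (negbTE i0) vi expr0n (gtn_eqF d0) mulr0n mulr0.
move=> /Hh_iff [nz wi].
pose x : vec n := fun k => if (k : nat) == 0%N then d.-root (w k - c * w (inord 1))
                         else d.-root (w k).
have hx : forall k, w k = evalmap (fmap_c n d c) x k.
  move=> k; rewrite evalf /x; case: eqP => _; last by rewrite rootK.
  by rewrite one_neq0 // !rootK // subrK.
split => //; exists x, 1; split.
  apply/Hh_iff; split; first exact: preimage_nz hx.
  by rewrite /x (negbTE i0) wi root00.
split; first exact: oner_neq0.
by apply: functional_extensionality => k; rewrite mul1r hx.
Qed.

Definition Lset n (a : CC) : pset n :=
  fun v => nonzero v /\ v ord0 = a * v (inord 1).
Arguments Lset : clear implicits.

Lemma image_L n d c (a : CC) : (1 <= n)%N -> (0 < d)%N ->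
  eq_p (pimage (fmap_c n d c) (Lset n a)) (Lset n (a ^+ d + c)).
Proof.
move=> n1 d0 w; split.
  move=> [nz [v [l [[nzv va] [l0 e]]]]]; split => //.
  rewrite e /= !evalf /= one_neq0 // va exprMn.
  move: (v (inord 1) ^+ d) => y; ring.
move=> [nz wa].
pose x : vec n := fun k => if (k : nat) == 0%N then a * d.-root (w (inord 1))
                         else d.-root (w k).
have hx : forall k, w k = evalmap (fmap_c n d c) x k.
  move=> k; rewrite evalf /x; case: eqP => k0; last by rewrite rootK.
  have -> : k = ord0 by apply: val_inj.
  rewrite one_neq0 // exprMn !rootK // wa; ring.
split => //; exists x, 1; split.
  split; first exact: preimage_nz hx.
  by rewrite /x /= one_neq0.
split; first exact: oner_neq0.
by apply: functional_extensionality => k; rewrite mul1r hx.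
Qed.


Lemma piter_Hi n d c (i : 'I_n.+1) k : (1 <= n)%N -> (0 < d)%N -> (i : nat) != 0%N ->
  eq_p (piter (fmap_c n d c) k (Hh i)) (Hh i).
Proof.
move=> n1 d0 i0; elim: k => [|k IH] //=.
apply: eq_p_trans (pimage_eq _ IH) _; exact: image_Hi.
Qed.

Lemma H0_L n : eq_p (Hh (ord0 : 'I_n.+1)) (Lset n 0).
Proof. by move=> v; rewrite Hh_iff /Lset mul0r. Qed.

Lemma piter_H0 n d c k : (1 <= n)%N -> (0 < d)%N ->
  eq_p (piter (fmap_c n d c) k (Hh (ord0 : 'I_n.+1)))
       (Lset n (iter k (fun z : CC => (z ^+ d + c)%R) 0%R)).
Proof.
move=> n1 d0; elim: k => [|k IH] /=; first exact: H0_L.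
apply: eq_p_trans (pimage_eq _ IH) _; exact: image_L.
Qed.

Lemma L_inj n (a b : CC) : (1 <= n)%N -> eq_p (Lset n a) (Lset n b) -> a = b.
Proof.
move=> n1 h.
pose p : vec n := fun k => if (k : nat) == 0%N then a else ((k : nat) == 1%N)%:R.
have p1 : p (inord 1) = 1 by rewrite /p one_neq0 // one_val.
have : Lset n a p.
  split; first by exists (inord 1); rewrite p1 oner_neq0.
  by rewrite p1 mulr1.
by move/h => [_]; rewrite p1 mulr1.
Qed.

Definition em n (m : nat) : vec n := fun k => ((k : nat) == m)%:R.
Arguments em : clear implicits.

Lemma bool_exp (b : bool) d : (0 < d)%N -> (b%:R : CC) ^+ d = b%:R.
Proof. by move=> d0; case: b; rewrite ?expr1n // expr0n (gtn_eqF d0). Qed.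

Lemma em_fixed n d c m (k : 'I_n.+1) : (1 <= n)%N -> (0 < d)%N -> m != 1%N ->
  evalmap (fmap_c n d c) (em n m) k = em n m k.
Proof.
move=> n1 d0 m1; rewrite evalf; case: eqP => _; last exact: bool_exp.
have -> : em n m (inord 1) = 0.
  by rewrite /em one_val // eq_sym (negbTE m1).
by rewrite expr0n (gtn_eqF d0) mulr0n mulr0 addr0 bool_exp.
Qed.

Lemma em_nz n m : (m <= n)%N -> nonzero (em n m).
Proof.
move=> mn; exists (inord m); rewrite /em inordK ?ltnS // eqxx oner_neq0 //.
Qed.

Lemma em_H n m (i : 'I_n.+1) : (m <= n)%N -> (i : nat) != m -> Hh i (em n m).
Proof.
move=> mn im; apply/Hh_iff; split; first exact: em_nz.
by rewrite /em (negbTE im).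
Qed.

Unset Implicit Arguments. Set Strict Implicit.

Theorem mainTheorem12 (n d : nat) (c : CC) :
  (2 <= n)%N -> (2 <= d)%N ->
  eq_p (critical_locus (fmap_c n d c)) (hyp (\prod_(i < n.+1) 'X_i)) /\
  dyn_improper (fmap_c n d c) (critical_locus (fmap_c n d c)) /\
  (preperiodic (fmap_c n d c) (critical_locus (fmap_c n d c)) <->
   exists s t : nat, s <> t /\
     iter s (fun z : CC => (z ^+ d + c)%R) 0%R = iter t (fun z : CC => (z ^+ d + c)%R) 0%R).
Proof.
move=> n2 d2.
have n1 : (1 <= n)%N by apply: leq_trans n2.
have d0 : (0 < d)%N by apply: leq_trans d2.
split.
  by move=> v; rewrite crit_iff // prodX_iff.
split.
  move=> r r0 Z hZ.
  have [i hi] := comp_Hh n1 d2 hZ.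
  exists (fun j : 'I_n.+1 => (j : nat)); split; first by move=> j k.
  pose m := if (i : nat) == 0%N then 2%N else 0%N.
  have mn : (m <= n)%N by rewrite /m; case: ifP.
  have m1 : m != 1%N by rewrite /m; case: ifP.
  have im : (i : nat) != m by rewrite /m; case: ifP => [/eqP -> // | /negbT //].
  exists (em n m) => j.
  apply/(piter_eq _ _ hi).
  apply: fixed_piter; first exact: em_H.
    exact: em_nz.
  by move=> k; apply: em_fixed.
split.
  move=> hpre.
  have [s [t [st hst]]] := hpre _ (Hh_comp c ord0 n1 d2).
  exists s, t; split => //.
  apply: (L_inj n1).
  apply: eq_p_trans (eq_p_sym (piter_H0 c s n1 d0)) _.
  apply: eq_p_trans hst _.
  exact: piter_H0.
move=> [s [t [st hst]]] Z hZ.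
have [i hi] := comp_Hh n1 d2 hZ.
case: (eqVneq (i : nat) 0%N) => [i0|i0].
  have ei : i = ord0 by apply: val_inj.
  rewrite ei in hi.
  exists s, t; split => //.
  apply: eq_p_trans (piter_eq _ _ hi) _.
  apply: eq_p_trans (piter_H0 c s n1 d0) _.
  rewrite hst.
  apply: eq_p_trans (eq_p_sym (piter_H0 c t n1 d0)) _.
  exact: (piter_eq _ _ (eq_p_sym hi)).
exists 0%N, 1%N; split => //.
apply: eq_p_trans (piter_eq _ _ hi) _.
apply: eq_p_trans (piter_Hi c 0 n1 d0 i0) _.
apply: eq_p_trans (eq_p_sym (piter_Hi c 1 n1 d0 i0)) _.
exact: (piter_eq _ _ (eq_p_sym hi)).
Qed.
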